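(* Let $c \in (0,1/2]$, $t_1 \in [0,1-2c]$, $t_2 \in [t_1+c,1-c]$, and $p,q\in(0,1)$ with $p\neq q$. Then \[ W_1(\mu_p,\mu_q) = \frac{t_2-t_1}{1-c}\,|p-q|. \]
   Context: Let $S_1(x)=cx+t_1$ and $S_2(x)=cx+t_2$ on $[0,1]$, and let $F\subseteq[0,1]$ be the unique nonempty compact set with $F=S_1(F)\cup S_2(F)$. For $p\in(0,1)$, $\mu_p$ is the unique Borel probability measure on $[0,1]$ with $\mu_p = p\,\mu_p\circ S_1^{-1} + (1-p)\,\mu_p\circ S_2^{-1}$. For Borel probability measures $\mu,\nu$ on $[0,1]$ and $\rho\ge1$, $W_\rho(\mu,\nu)=\inf_{\gamma}\left(\int |x-y|^\rho\,d\gamma(x,y)\right)^{1/\rho}$, the infimum over all Borel probability measures $\gamma$ on $[0,1]^2$ with first marginal $\mu$ and second marginal $\nu$. *)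

(* Defs.v *)
From HB Require Import structures.
From mathcomp Require Import all_boot all_order all_algebra.
From mathcomp Require Import all_classical all_reals all_analysis.
Set Implicit Arguments. Unset Strict Implicit. Unset Printing Implicit Defensive.
Import Order.TTheory GRing.Theory Num.Theory.
Local Open Scope classical_set_scope.
Local Open Scope ring_scope.

Definition Smap (R : realType) (c t : R) : R -> R := fun x => c * x + t.

(* mu is a Borel probability measure on R concentrated on [0,1] satisfying
   mu = p mu o S1^{-1} + (1-p) mu o S2^{-1}; by uniqueness this is mu_p. *)
Definition is_ss_measure (R : realType) (c t1 t2 p : R) (mu : probability R R) : Prop :=
  mu `[0%R, 1%R]%classic = 1%E /\
  forall A : set R, measurable A ->
    mu A = (p%:E * mu (Smap c t1 @^-1` A) + (1 - p)%:E * mu (Smap c t2 @^-1` A))%E.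

Definition is_coupling (R : realType) (mu nu : probability R R)
    (gamma : probability (R * R)%type R) : Prop :=
  (forall A : set R, measurable A -> gamma (A `*` setT) = mu A) /\
  (forall B : set R, measurable B -> gamma (setT `*` B) = nu B).

Definition W1 (R : realType) (mu nu : probability R R) : \bar R :=
  ereal_inf [set (\int[gamma]_z (`|z.1 - z.2|)%:E)%E
            | gamma in [set g | is_coupling mu nu g]].

(* Main.v *)
Require Import Defs.
From HB Require Import structures.
From mathcomp Require Import all_boot all_order all_algebra.
From mathcomp Require Import all_classical all_reals all_analysis.
From mathcomp Require Import measurable_realfun.
From mathcomp Require Import ring lra.
Import Order.TTheory GRing.Theory Num.Theory.
Local Open Scope classical_set_scope.
Local Open Scope ring_scope.
Set Implicit Arguments. Unset Strict Implicit. Unset Printing Implicit Defensive.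
Import numFieldTopology.Exports numFieldNormedType.Exports.

Section Basic.
Variable R : realType.
Variable mu : probability R R.
Hypothesis mu01 : mu `[0, 1]%classic = 1%E.

Definition Fd (x : R) : R := fine (mu `]-oo, x]%classic).

Lemma mu_out : mu (~` `[0, 1]%classic) = 0%E.
Proof. by rewrite probability_setC // mu01 subee. Qed.

Lemma Fd_E x : (Fd x)%:E = mu `]-oo, x]%classic.
Proof. by rewrite /Fd fineK // fin_num_measure. Qed.

Lemma Fd_ge0 x : 0 <= Fd x.
Proof. by rewrite -lee_fin Fd_E. Qed.

Lemma Fd_le1 x : Fd x <= 1.
Proof. by rewrite -lee_fin Fd_E probability_le1. Qed.

Lemma Fd_nd x y : x <= y -> Fd x <= Fd y.
Proof.
move=> xy; rewrite -lee_fin !Fd_E; apply: le_measure; rewrite ?inE //.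
by apply: subset_itv; rewrite bnd_simp.
Qed.

Lemma Fd_neg x : x < 0 -> Fd x = 0.
Proof.
move=> x0; apply/eqP; rewrite eq_le Fd_ge0 andbT -lee_fin Fd_E.
rewrite (_ : 0%:E = 0%E) // -mu_out.
apply: le_measure; rewrite ?inE //; first exact: measurableC.
move=> y /=; rewrite !in_itv /= => yx /andP[y0 _].
by move: (le_lt_trans y0 (le_lt_trans yx x0)); rewrite ltxx.
Qed.

Lemma Fd_ge1 x : 1 <= x -> Fd x = 1.
Proof.
move=> x1; apply/eqP; rewrite eq_le Fd_le1 /= -lee_fin Fd_E -mu01.
apply: le_measure; rewrite ?inE //.
move=> y /=; rewrite !in_itv /= => /andP[_ y1].
exact: le_trans y1 x1.
Qed.

End Basic.

Definition idR (R : realType) : R -> R := id.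
HB.instance Definition _ (R : realType) :=
  isMeasurableFun.Build _ _ R R (@idR R) (@measurable_id _ R setT).

Lemma Fd_rc (R : realType) (mu : probability R R) x u :
  Fd mu x < u -> exists2 y, x < y & Fd mu y < u.
Proof.
move=> Hu.
pose X : {RV mu >-> R} := @idR R.
have E z : cdf X z = mu `]-oo, z]%classic by [].
have h : (Fd mu) y @[y --> x^'+] --> Fd mu x.
  have := @cdf_right_continuous _ _ _ mu X x.
  rewrite E -Fd_E => /fine_cvg.
  by apply: cvg_trans; apply: near_eq_cvg; near=> y.
have H : \forall y \near x^'+, Fd mu y < u by exact: (cvgr_lt _ h _ Hu).
have [y [xy Fy]] := filter_ex (filterI (nbhs_right_gt x) H).
by exists y.
Unshelve. all: by end_near.
Qed.

Section Quant.
Variable R : realType.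
Variable mu : probability R R.
Hypothesis mu01 : mu `[0, 1]%classic = 1%E.

Definition Qset (u : R) := [set y : R | 0 <= y /\ (u <= Fd mu y \/ 1 <= y)].
Definition Qd (u : R) : R := inf (Qset u).

Lemma Qset_ne u : Qset u !=set0.
Proof. by exists 1; split => //; right. Qed.

Lemma Qset_lb u : lbound (Qset u) 0.
Proof. by move=> y []. Qed.

Lemma Qset_hlb u : has_lbound (Qset u).
Proof. by exists 0; exact: Qset_lb. Qed.

Lemma Qd_ge0 u : 0 <= Qd u.
Proof. apply: lb_le_inf; [exact: Qset_ne | exact: Qset_lb]. Qed.

Lemma Qd_le u y : Qset u y -> Qd u <= y.
Proof. by move=> Sy; apply: ge_inf (Qset_hlb u) _ Sy. Qed.

Lemma Qd_le1 u : Qd u <= 1.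
Proof. by apply: Qd_le; split => //; right. Qed.

Lemma Qd_nd u v : u <= v -> Qd u <= Qd v.
Proof.
move=> uv; apply: lb_le_inf (Qset_ne v) _ => y [y0 [Hy|Hy]].
- by apply: Qd_le; split => //; left; apply: le_trans uv Hy.
- by apply: Qd_le; split => //; right.
Qed.

Lemma Qd_gal u x : 0 < u -> u <= 1 -> (Qd u <= x <-> u <= Fd mu x).
Proof.
move=> u0 u1; split => [Qx|uF].
- rewrite leNgt; apply/negP => /Fd_rc [y xy Fy].
  have : y <= Qd u.
    apply: lb_le_inf (Qset_ne u) _ => z [z0 Hz].
    rewrite leNgt; apply/negP => zy.
    have Fz : Fd mu z < u by apply: le_lt_trans (Fd_nd mu (ltW zy)) Fy.
    case: Hz => [Hz|Hz]; first by move: (le_lt_trans Hz Fz); rewrite ltxx.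
    by move: Fz; rewrite Fd_ge1 // ltNge u1.
  by move=> yQ; move: (lt_le_trans xy (le_trans yQ Qx)); rewrite ltxx.
- apply: Qd_le; split; last by left.
  rewrite leNgt; apply/negP => x0.
  by move: (lt_le_trans u0 uF); rewrite Fd_neg // ltxx.
Qed.

End Quant.

Lemma Qd_cmp (R : realType) (mu nu : probability R R) u :
  (forall x, Fd nu x <= Fd mu x) -> Qd mu u <= Qd nu u.
Proof.
move=> H; apply: lb_le_inf (Qset_ne nu u) _ => y [y0 [Hy|Hy]].
- by apply: Qd_le; split => //; left; apply: le_trans Hy (H y).
- by apply: Qd_le; split => //; right.
Qed.

Section Unif.
Variable R : realType.
Definition Uni (A : set R) : \bar R :=
  (@lebesgue_measure R) (A `&` `]0, 1]%classic).

Let Uni0 : Uni set0 = 0%E.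
Proof. by rewrite /Uni set0I measure0. Qed.

Let Uni_ge0 A : (0 <= Uni A)%E.
Proof. exact: measure_ge0. Qed.

Let Uni_sa : semi_sigma_additive Uni.
Proof.
move=> F mF tF mUF; rewrite /Uni setI_bigcupl.
apply: (@measure_semi_sigma_additive _ _ _ (@lebesgue_measure R)
   (fun n => F n `&` `]0, 1]%classic)).
- by move=> n; apply: measurableI => //; exact: mF.
- apply: trivIset_setIr; exact: tF.
- by rewrite -setI_bigcupl; apply: measurableI.
Qed.

HB.instance Definition _ := isMeasure.Build _ _ _ Uni Uni0 Uni_ge0 Uni_sa.

Let Uni_T : Uni setT = 1%E.
Proof. by rewrite /Uni setTI lebesgue_measure_itv /= lte01 -EFinD subr0. Qed.

HB.instance Definition _ := Measure_isProbability.Build _ _ _ Uni Uni_T.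

End Unif.




Lemma Uni_I (R : realType) (A : set R) : Uni (A `&` `]0, 1]%classic) = Uni A.
Proof. by rewrite /Uni -setIA setIid. Qed.

Lemma Uni_oc (R : realType) (a b : R) : 0 <= a -> a <= b -> b <= 1 ->
  Uni `]a, b]%classic = (b - a)%:E.
Proof.
move=> a0 ab b1; rewrite /Uni.
have -> : `]a, b]%classic `&` `]0, 1]%classic = `]a, b]%classic.
  apply/setIidl => x /=; rewrite !in_itv /= => /andP[ax xb].
  by rewrite (le_lt_trans a0 ax) (le_trans xb b1).
rewrite lebesgue_measure_itv /= lte_fin.
have [ab'|ba] := ltP a b; first by rewrite EFinD EFinN. have -> : b = a by apply/eqP; rewrite eq_le ab ba.
by rewrite subrr.
Qed.

Lemma Qd_meas (R : realType) (mu : probability R R) : measurable_fun setT (Qd mu).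
Proof. by apply: measurable_realfun.nondecreasing_measurable => // u v; exact: Qd_nd. Qed.

HB.instance Definition _ (R : realType) (mu : probability R R) :=
  isMeasurableFun.Build _ _ R R (Qd mu) (Qd_meas mu).

Lemma mu_oc (R : realType) (mu : probability R R) (a b : R) : a <= b ->
  mu `]a, b]%classic = (Fd mu b - Fd mu a)%:E.
Proof.
move=> ab.
have -> : `]a, b]%classic = `]-oo, b]%classic `\` `]-oo, a]%classic.
  by rewrite -[RHS]setCK setCD setCitvl setUC -[LHS]setCK setCitv.
rewrite measureD ?setIidr//.
- by rewrite EFinB !Fd_E.
- by apply: subset_itvl; rewrite bnd_simp.
- by rewrite -ge0_fin_numE// fin_num_measure.
Qed.

Lemma marg (R : realType) (mu : probability R R) :
  mu `[0, 1]%classic = 1%E ->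
  forall A, measurable A -> distribution (@Uni R) (Qd mu) A = mu A.
Proof.
move=> mu01 A mA.
apply: (measure_unique (@ocitv R)
   (fun k : nat => [set` Interval (BSide false (1 *- k)) (BSide false k%:R)])) => //.
- exact: ocitvI.
- by move=> k; exact: is_ocitv.
- exact: bigcup_itvT.
- move=> _ [[a b] _ <-] /=.
  have [ab|ba] := leP a b; last first.
    by rewrite set_itv_ge ?measure0 // bnd_simp -leNgt ltW.
  rewrite mu_oc // /distribution /pushforward -Uni_I.
  have -> : Qd mu @^-1` `]a, b]%classic `&` `]0, 1]%classic =
            `]Fd mu a, Fd mu b]%classic.
    apply/seteqP; split => u /=.
    - rewrite !in_itv /= => -[/andP[aQ Qb] /andP[u0 u1]].
      rewrite ((Qd_gal mu01 b u0 u1).1 Qb) andbT ltNge; apply/negP => uF.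
      by move: (le_lt_trans ((Qd_gal mu01 a u0 u1).2 uF) aQ); rewrite ltxx.
    - rewrite !in_itv /= => /andP[Fu uF].
      have u0 : 0 < u by apply: le_lt_trans (Fd_ge0 _ _) Fu.
      have u1 : u <= 1 by apply: le_trans uF (Fd_le1 _ _).
      rewrite u0 u1; split => //.
      rewrite ((Qd_gal mu01 b u0 u1).2 uF) andbT ltNge.
      by apply/negP => /(Qd_gal mu01 a u0 u1); rewrite leNgt Fu.
  by rewrite Uni_oc ?Fd_ge0 ?Fd_le1 ?Fd_nd.
- by move=> k; apply: (le_lt_trans (probability_le1 _ _)) => //; exact: ltry.
Qed.

Definition g01 (R : realType) (x : R) : R := Num.min (Num.max x 0) 1.

Lemma g01_nd (R : realType) : {homo (@g01 R) : x y / x <= y}.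
Proof.
move=> x y xy; rewrite /g01.
case: (leP x 0); case: (leP y 0); case: (leP x 1); case: (leP y 1);
  rewrite ?ler01 //=; try lra.
all: by rewrite /Num.max /Num.min /=; repeat case: ifPn; lra.
Qed.

Lemma g01_meas (R : realType) : measurable_fun setT (@g01 R).
Proof. by apply: measurable_realfun.nondecreasing_measurable => //; exact: g01_nd. Qed.

Lemma g01_id (R : realType) (x : R) : 0 <= x <= 1 -> g01 x = x.
Proof.
case/andP => x0 x1; rewrite /g01.
by rewrite (@max_idPl _ _ x 0 x0) (@min_idPl _ _ x 1 x1).
Qed.

Lemma g01_01 (R : realType) (x : R) : 0 <= g01 x <= 1.
Proof.
rewrite /g01 /Num.max /Num.min; repeat case: ifPn => /=; lra.
Qed.

Lemma g01_lip (R : realType) (x y : R) : g01 x <= `|x - y| + g01 y.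
Proof.
have h : x - y <= `|x - y| by apply: ler_norm.
have h' : y - x <= `|x - y| by rewrite distrC; apply: ler_norm.
rewrite /g01 /Num.max /Num.min; repeat case: ifPn => /=; lra.
Qed.

Local Open Scope ereal_scope.


Definition mean (R : realType) (mu : probability R R) : \bar R :=
  \int[mu]_x (g01 x)%:E.

Lemma mean_01 (R : realType) (mu : probability R R) : 0 <= mean mu <= 1.
Proof.
apply/andP; split.
  by apply: integral_ge0 => x _; rewrite lee_fin; case/andP: (g01_01 x).
apply: (@le_trans _ _ (\int[mu]_x (cst 1%:E x))).
  apply: ge0_le_integral => //.
  - by move=> x _; rewrite lee_fin; case/andP: (g01_01 x).
  - by apply/measurable_EFinP; exact: g01_meas.
  - by move=> x _; rewrite lee_fin; case/andP: (g01_01 x).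
by rewrite integral_cst // mul1e; apply: probability_le1.
Qed.

Definition fstR (R : realType) : R * R -> R := fst.
HB.instance Definition _ (R : realType) :=
  isMeasurableFun.Build _ _ (R * R)%type R (@fstR R) measurable_fst.
Definition sndR (R : realType) : R * R -> R := snd.
HB.instance Definition _ (R : realType) :=
  isMeasurableFun.Build _ _ (R * R)%type R (@sndR R) measurable_snd.

Lemma int_fst (R : realType) (mu nu : probability R R) (gam : probability (R * R)%type R) :
  is_coupling mu nu gam -> \int[gam]_z (g01 z.1)%:E = mean mu.
Proof.
case=> H1 _.
rewrite /mean (eq_measure_integral (distribution gam (@fstR R))); last first.
  move=> A mA _; rewrite /distribution /pushforward /=.
  symmetry; etransitivity; last exact: (H1 A mA).
  by congr (gam _); apply/seteqP; split => [[x y]|[x y]] //= [].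
rewrite ge0_integral_distribution //.
- by apply/measurable_EFinP; exact: g01_meas.
- by move=> x; rewrite lee_fin; case/andP: (g01_01 x).
Qed.

Lemma int_snd (R : realType) (mu nu : probability R R) (gam : probability (R * R)%type R) :
  is_coupling mu nu gam -> \int[gam]_z (g01 z.2)%:E = mean nu.
Proof.
case=> _ H1.
rewrite /mean (eq_measure_integral (distribution gam (@sndR R))); last first.
  move=> A mA _; rewrite /distribution /pushforward /=.
  symmetry; etransitivity; last exact: (H1 A mA).
  by congr (gam _); apply/seteqP; split => [[x y]|[x y]] //= [].
rewrite ge0_integral_distribution //.
- by apply/measurable_EFinP; exact: g01_meas.
- by move=> x; rewrite lee_fin; case/andP: (g01_01 x).
Qed.

Lemma meas_dist (R : realType) :
  measurable_fun setT (fun z : R * R => (`|z.1 - z.2|)%:E).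
Proof.
apply/measurable_EFinP; apply: measurableT_comp => //.
exact: measurable_funB.
Qed.

Lemma lower (R : realType) (mu nu : probability R R) (gam : probability (R * R)%type R) :
  is_coupling mu nu gam ->
  mean mu <= \int[gam]_z (`|z.1 - z.2|)%:E + mean nu.
Proof.
move=> cp; rewrite -(int_fst cp) -(int_snd cp) -ge0_integralD //.
- apply: ge0_le_integral => //.
  + by move=> x _; rewrite lee_fin; case/andP: (g01_01 x.1).
  + by apply/measurable_EFinP; apply: measurableT_comp => //; exact: g01_meas.
  + apply: emeasurable_funD; first exact: meas_dist.
    by apply/measurable_EFinP; apply: measurableT_comp => //; exact: g01_meas.
  + by move=> z _; rewrite -EFinD lee_fin g01_lip.
- exact: meas_dist.
- by move=> x _; rewrite lee_fin; case/andP: (g01_01 x.2).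
- by apply/measurable_EFinP; apply: measurableT_comp => //; exact: g01_meas.
Qed.

Lemma lower' (R : realType) (mu nu : probability R R) (gam : probability (R * R)%type R) :
  is_coupling mu nu gam ->
  mean nu <= \int[gam]_z (`|z.1 - z.2|)%:E + mean mu.
Proof.
move=> cp; rewrite -(int_fst cp) -(int_snd cp) -ge0_integralD //.
- apply: ge0_le_integral => //.
  + by move=> x _; rewrite lee_fin; case/andP: (g01_01 x.2).
  + by apply/measurable_EFinP; apply: measurableT_comp => //; exact: g01_meas.
  + apply: emeasurable_funD; first exact: meas_dist.
    by apply/measurable_EFinP; apply: measurableT_comp => //; exact: g01_meas.
  + by move=> z _; rewrite -EFinD lee_fin distrC g01_lip.
- exact: meas_dist.
- by move=> x _; rewrite lee_fin; case/andP: (g01_01 x.1).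
- by apply/measurable_EFinP; apply: measurableT_comp => //; exact: g01_meas.
Qed.

Local Close Scope ereal_scope.

Local Open Scope ereal_scope.


Definition QQ (R : realType) (mu nu : probability R R) (u : R) : R * R :=
  (Qd mu u, Qd nu u).

Lemma QQ_meas (R : realType) (mu nu : probability R R) : measurable_fun setT (QQ mu nu).
Proof. exact: measurable_fun_pair (Qd_meas mu) (Qd_meas nu). Qed.

HB.instance Definition _ (R : realType) (mu nu : probability R R) :=
  isMeasurableFun.Build _ _ R (R * R)%type (QQ mu nu) (QQ_meas mu nu).

Definition gam (R : realType) (mu nu : probability R R) : probability (R * R)%type R :=
  distribution (@Uni R) (QQ mu nu).

Lemma gam_cp (R : realType) (mu nu : probability R R) :
  mu `[0%R, 1%R]%classic = 1 -> nu `[0%R, 1%R]%classic = 1 -> is_coupling mu nu (gam mu nu).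
Proof.
move=> mu01 nu01; split => A mA; rewrite /gam /distribution /pushforward /=.
- rewrite -(marg mu01 mA) /distribution /pushforward /=.
  by congr (Uni _); apply/seteqP; split => u //= [].
- rewrite -(marg nu01 mA) /distribution /pushforward /=.
  by congr (Uni _); apply/seteqP; split => u //= [].
Qed.

Lemma int_Q (R : realType) (mu : probability R R) :
  mu `[0%R, 1%R]%classic = 1 -> \int[@Uni R]_u (Qd mu u)%:E = mean mu.
Proof.
move=> mu01.
rewrite /mean [RHS](eq_measure_integral (distribution (@Uni R) (Qd mu))); last first.
  by move=> A mA _; symmetry; exact: (marg mu01 mA).
rewrite ge0_integral_distribution //.
- apply: eq_integral => u _ /=; rewrite g01_id //.
  by rewrite Qd_ge0 Qd_le1.
- by apply/measurable_EFinP; exact: g01_meas.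
- by move=> x; rewrite lee_fin; case/andP: (g01_01 x).
Qed.

Lemma gam_int (R : realType) (mu nu : probability R R) :
  mu `[0%R, 1%R]%classic = 1 -> nu `[0%R, 1%R]%classic = 1 ->
  (forall x, (Fd nu x <= Fd mu x)%R) ->
  \int[gam mu nu]_z (`|z.1 - z.2|)%:E + mean mu = mean nu.
Proof.
move=> mu01 nu01 H.
rewrite /gam ge0_integral_distribution //; last exact: meas_dist.
rewrite -(int_Q mu01) -(int_Q nu01) -ge0_integralD //.
- apply: eq_integral => u _ /=; rewrite -EFinD; congr (_%:E).
  rewrite ler0_norm ?subr_le0 ?Qd_cmp //; lra.
- by move=> x _; rewrite lee_fin.
- by apply/measurable_EFinP; apply: measurableT_comp => //;
     apply: measurable_funB; exact: Qd_meas.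
- by move=> x _; rewrite lee_fin Qd_ge0.
- by apply/measurable_EFinP; exact: Qd_meas.
Qed.

Lemma gam_int' (R : realType) (mu nu : probability R R) :
  mu `[0%R, 1%R]%classic = 1 -> nu `[0%R, 1%R]%classic = 1 ->
  (forall x, (Fd mu x <= Fd nu x)%R) ->
  \int[gam mu nu]_z (`|z.1 - z.2|)%:E + mean nu = mean mu.
Proof.
move=> mu01 nu01 H.
rewrite /gam ge0_integral_distribution //; last exact: meas_dist.
rewrite -(int_Q mu01) -(int_Q nu01) -ge0_integralD //.
- apply: eq_integral => u _ /=; rewrite -EFinD; congr (_%:E).
  rewrite ger0_norm ?subr_ge0 ?Qd_cmp //; lra.
- by move=> x _; rewrite lee_fin.
- by apply/measurable_EFinP; apply: measurableT_comp => //;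
     apply: measurable_funB; exact: Qd_meas.
- by move=> x _; rewrite lee_fin Qd_ge0.
- by apply/measurable_EFinP; exact: Qd_meas.
Qed.

Local Close Scope ereal_scope.

Lemma Smap_pre (R : realType) (c t x : R) : 0 < c ->
  Smap c t @^-1` `]-oo, x]%classic = `]-oo, (x - t) / c]%classic.
Proof.
move=> c0; apply/seteqP; split => y /=; rewrite !in_itv /= /Smap.
- by move=> h; rewrite ler_pdivlMr // mulrC; lra.
- by rewrite ler_pdivlMr // mulrC => h; lra.
Qed.

Lemma Fd_rec (R : realType) (c t1 t2 p : R) (mu : probability R R) x :
  0 < c -> is_ss_measure c t1 t2 p mu ->
  Fd mu x = p * Fd mu ((x - t1) / c) + (1 - p) * Fd mu ((x - t2) / c).
Proof.
move=> c0 [_ H].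
apply/EFin_inj; rewrite Fd_E H // !Smap_pre // -!Fd_E.
by rewrite -!EFinM -EFinD.
Qed.

Lemma dominance (R : realType) (c t1 t2 p q : R) (mu nu : probability R R) :
  0 < c -> t1 + c <= t2 -> 0 < p < 1 -> q < p ->
  is_ss_measure c t1 t2 p mu -> is_ss_measure c t1 t2 q nu ->
  forall x, Fd nu x <= Fd mu x.
Proof.
move=> c0 tc /andP[p0 p1] qp Hmu Hnu.
have mu01 := Hmu.1; have nu01 := Hnu.1.
pose D x := Fd mu x - Fd nu x.
pose a := Num.max p (1 - p).
have a0 : 0 <= a by rewrite le_max ltW.
have pa : p <= a by rewrite le_max lexx.
have pa' : 1 - p <= a by rewrite le_max lexx orbT.
have a1 : a < 1 by rewrite gt_max p1 /=; lra.
have Dout y : y < 0 \/ 1 <= y -> D y = 0.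
  case=> h; rewrite /D.
    by rewrite (Fd_neg mu01 h) (Fd_neg nu01 h) subrr.
  by rewrite (Fd_ge1 mu01 h) (Fd_ge1 nu01 h) subrr.
have key n : forall x, - a ^+ n <= D x.
  elim: n => [|n IH] x.
    rewrite expr0 /D; have := Fd_ge0 mu x; have := Fd_le1 nu x; lra.
  set y1 := (x - t1) / c; set y2 := (x - t2) / c.
  have y21 : y2 <= y1.
    by rewrite /y1 /y2 ler_pM2r ?invr_gt0 //; lra.
  have Fy : Fd nu y2 <= Fd nu y1 by apply: Fd_nd.
  have DE : D x = p * D y1 + (1 - p) * D y2 +
                  (p - q) * (Fd nu y1 - Fd nu y2).
    by rewrite /D (Fd_rec x c0 Hmu) (Fd_rec x c0 Hnu) -/y1 -/y2; ring.
  have extra : 0 <= (p - q) * (Fd nu y1 - Fd nu y2).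
    by apply: mulr_ge0; lra.
  have an0 : 0 <= a ^+ n by apply: exprn_ge0.
  rewrite exprS DE.
  have [y1lt|y1ge] := ltP y1 1.
  - have y2lt : y2 < 0.
      rewrite /y2 ltr_pdivrMr // mul0r.
      move: y1lt; rewrite /y1 ltr_pdivrMr // mul1r; lra.
    rewrite (Dout y2 (or_introl y2lt)) mulr0 addr0.
    have h1 : p * (- a ^+ n) <= p * D y1 by apply: ler_wpM2l; [lra | exact: IH].
    have h2 : a * a ^+ n >= p * a ^+ n by apply: ler_wpM2r.
    lra.
  - rewrite (Dout y1 (or_intror y1ge)) mulr0 add0r.
    have h1 : (1 - p) * (- a ^+ n) <= (1 - p) * D y2 by apply: ler_wpM2l; [lra | exact: IH].
    have h2 : a * a ^+ n >= (1 - p) * a ^+ n by apply: ler_wpM2r.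
    lra.
move=> x; rewrite -subr_ge0 -/(D x) leNgt; apply/negP => Dx.
have ha : `|a| < 1 by rewrite ger0_norm.
have H : \forall n \near \oo, a ^+ n < - D x.
  by apply: (cvgr_lt _ (cvg_expr ha)); lra.
have [n Hn] := filter_ex H.
have := key n x; lra.
Qed.

Local Open Scope ereal_scope.


Lemma int_agree (R : realType) (mu : probability R R) (f1 f2 : R -> \bar R) :
  mu `[0%R, 1%R]%classic = 1 ->
  measurable_fun setT f1 -> measurable_fun setT f2 ->
  (forall x, 0 <= f1 x) -> (forall x, 0 <= f2 x) ->
  (forall x, (0 <= x <= 1)%R -> f1 x = f2 x) ->
  \int[mu]_x f1 x = \int[mu]_x f2 x.
Proof.
move=> mu01 m1 m2 p1 p2 E.
have mI : measurable (`[0%R, 1%R]%classic : set R) by [].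
have mC : measurable (~` (`[0%R, 1%R]%classic : set R)) by exact: measurableC.
rewrite -(setUv (`[0%R, 1%R]%classic : set R)).
have dj : [disjoint (`[0%R, 1%R]%classic : set R) & ~` `[0%R, 1%R]%classic].
  by apply/disj_setPCl.
rewrite ge0_integral_setU //; last by rewrite setUv.
rewrite [RHS]ge0_integral_setU //; last by rewrite setUv.
rewrite [X in X = _](_ : _ = \int[mu]_(x in `[0%R, 1%R]) f1 x + 0); last first.
  congr (_ + _); apply: null_set_integral => //.
  - exact: measurable_funS m1.
  - exact: (mu_out mu01).
rewrite [X in _ = X](_ : _ = \int[mu]_(x in `[0%R, 1%R]) f2 x + 0); last first.
  congr (_ + _); apply: null_set_integral => //.
  - exact: measurable_funS m2.
  - exact: (mu_out mu01).
congr (_ + _); apply: eq_integral => x; rewrite inE /= in_itv /=.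
exact: E.
Qed.

Lemma Smap_meas (R : realType) (c t : R) : measurable_fun setT (Smap c t).
Proof.
by rewrite /Smap; apply: measurable_funD => //.
Qed.

HB.instance Definition _ (R : realType) (c t : R) :=
  isMeasurableFun.Build _ _ R R (Smap c t) (Smap_meas c t).

Lemma EFin_ge0 (R : realType) (x : R) : (0 <= x)%R -> 0 <= x%:E.
Proof. by rewrite lee_fin. Qed.

Lemma g01_ge0E (R : realType) (x : R) : 0 <= (g01 x)%:E.
Proof. by rewrite lee_fin; case/andP: (g01_01 x). Qed.

Lemma g01_measE (R : realType) : measurable_fun setT (fun x : R => (g01 x)%:E).
Proof. by apply/measurable_EFinP; exact: g01_meas. Qed.

Lemma int_aff (R : realType) (mu : probability R R) (c t : R) :
  mu `[0%R, 1%R]%classic = 1 -> (0 <= c)%R -> (0 <= t)%R -> (t + c <= 1)%R ->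
  \int[mu]_x (g01 (Smap c t x))%:E = c%:E * mean mu + t%:E.
Proof.
move=> mu01 c0 t0 tc.
have g0 (x : R) : (0 <= g01 x)%R by case/andP: (g01_01 x).
have mg : measurable_fun setT (fun x : R => (g01 x)%:E) by exact: g01_measE.
have mcg : measurable_fun setT (fun x : R => (c * g01 x)%:E).
  by apply/measurable_EFinP; apply: measurable_funM => //; exact: g01_meas.
rewrite (@int_agree _ _ _ (fun x => (c * g01 x)%:E + t%:E)) //.
- rewrite ge0_integralD //; [|by move=> x _; apply: EFin_ge0; exact: mulr_ge0 c0 (g0 x)].
  rewrite (_ : (fun x => (c * g01 x)%:E) = (fun x => c%:E * (g01 x)%:E)); last first.
    by apply/funext => x; rewrite EFinM.
  rewrite ge0_integralZl //; last by move=> x _; rewrite lee_fin.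
  rewrite integral_cst //; congr (_ + _).
  by rewrite [X in _ * X](_ : _ = 1) ?mule1 //; exact: probability_setT.
- apply: measurableT_comp => //; apply: measurableT_comp => //; exact: g01_meas.
- rewrite (_ : (fun x => _) = (fun x => (c * g01 x + t)%:E)); last first.
    by apply/funext => x; rewrite EFinD.
  apply/measurable_EFinP; apply: measurable_funD => //.
  by apply: measurable_funM => //; exact: g01_meas.
- by move=> x; exact: g01_ge0E.
- by move=> x; rewrite adde_ge0 //; apply: EFin_ge0; exact: mulr_ge0 c0 (g0 x).
- move=> x /andP[x0 x1]; rewrite -EFinD (g01_id (x := x)) ?x0 //.
  rewrite g01_id // /Smap; apply/andP; split.
  + by rewrite addr_ge0 // mulr_ge0.
  + by rewrite (le_trans _ tc) // addrC lerD2l ler_piMr.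
Qed.

Lemma mean_rec (R : realType) (c t1 t2 p : R) (mu : probability R R) :
  (0 < c)%R -> (0 < p < 1)%R -> (0 <= t1)%R -> (t1 + c <= 1)%R ->
  (0 <= t2)%R -> (t2 + c <= 1)%R -> is_ss_measure c t1 t2 p mu ->
  mean mu = p%:E * (c%:E * mean mu + t1%:E) + (1 - p)%:E * (c%:E * mean mu + t2%:E).
Proof.
move=> c0 /andP[p0 p1] t10 t1c t20 t2c [mu01 H].
have p0' : (0 <= p)%R by apply: ltW.
have q0' : (0 <= 1 - p)%R by rewrite subr_ge0 ltW.
pose pp := NngNum p0'; pose qq := NngNum q0'.
pose M := measure_add (mscale pp (distribution mu (Smap c t1)))
                      (mscale qq (distribution mu (Smap c t2))).
transitivity (\int[M]_x (g01 x)%:E).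
  apply: eq_measure_integral => A mA _.
  etransitivity; first exact: (H A mA).
  symmetry; exact: (measure_addE _ _ A).
rewrite ge0_integral_measure_add //; last 2 first.
- by move=> x _; exact: g01_ge0E.
- exact: g01_measE.
rewrite !ge0_integral_mscale //; last 4 first.
- exact: g01_measE.
- by move=> x _; exact: g01_ge0E.
- exact: g01_measE.
- by move=> x _; exact: g01_ge0E.
rewrite !ge0_integral_distribution //; last 4 first.
- exact: g01_measE.
- by move=> x; exact: g01_ge0E.
- exact: g01_measE.
- by move=> x; exact: g01_ge0E.
by rewrite /= !int_aff // ltW.
Qed.

Local Close Scope ereal_scope.

Lemma hlp1 (R : realType) (a b : R) (I : \bar R) :
  (0 <= I)%E -> (a%:E <= I + b%:E)%E -> ((a - b)%:E <= I)%E.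
Proof.
case: I => [r| |].
- by move=> _; rewrite -EFinD !lee_fin; lra.
- by move=> _ _; rewrite leey.
- by rewrite leNgt ltNye.
Qed.

Lemma hlp2 (R : realType) (a b : R) (I : \bar R) :
  (I + b%:E)%E = a%:E -> I = (a - b)%:E.
Proof.
case: I => [r| |] //=.
move=> h; have h' : r + b = a by apply: EFin_inj; rewrite EFinD.
by rewrite -h' addrK.
Qed.

Lemma mean_val (R : realType) (c t1 t2 p : R) (mu : probability R R) :
  0 < c -> 0 < p < 1 -> 0 <= t1 -> t1 + c <= 1 ->
  0 <= t2 -> t2 + c <= 1 -> is_ss_measure c t1 t2 p mu ->
  exists m, mean mu = m%:E /\ m * (1 - c) = p * t1 + (1 - p) * t2.
Proof.
move=> c0 hp t10 t1c t20 t2c Hmu.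
have /andP[m0 m1] := mean_01 mu.
have fm : mean mu \is a fin_num.
  by rewrite ge0_fin_numE // (le_lt_trans m1) // ltry.
exists (fine (mean mu)); split; first by rewrite fineK.
have h0 := mean_rec c0 hp t10 t1c t20 t2c Hmu.
set m := fine (mean mu).
have em : mean mu = m%:E by rewrite /m fineK.
rewrite em -!EFinM -!EFinD in h0.
have h := EFin_inj h0.
have e : m * (1 - c) - (p * t1 + (1 - p) * t2) =
         m - (p * (c * m + t1) + (1 - p) * (c * m + t2)) by ring.
by apply/eqP; rewrite -subr_eq0 e -h subrr.
Qed.

Definition cost (R : realType) (g : probability (R * R)%type R) : \bar R :=
  \int[g]_z (`|z.1 - z.2|)%:E.

Lemma int_dist_ge0 (R : realType) (g : probability (R * R)%type R) :
  (0 <= \int[g]_z (`|z.1 - z.2|)%:E)%E.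
Proof. by apply: integral_ge0 => z _; rewrite lee_fin. Qed.

Unset Implicit Arguments.
Theorem corollary2p6 (R : realType) (c t1 t2 p q : R)
    (mu nu : probability R R) :
  0 < c <= 1 / 2 ->
  0 <= t1 <= 1 - 2 * c ->
  t1 + c <= t2 <= 1 - c ->
  0 < p < 1 -> 0 < q < 1 -> p != q ->
  is_ss_measure c t1 t2 p mu ->
  is_ss_measure c t1 t2 q nu ->
  W1 mu nu = ((t2 - t1) / (1 - c) * `|p - q|)%:E.
Proof.
move=> /andP[c0 c12] /andP[t10 t1c'] /andP[t2a t2b] hp hq pq Hmu Hnu.
have c1 : c < 1 by lra.
have c1' : 1 - c != 0 by rewrite subr_eq0 eq_sym lt_eqF.
have t1c : t1 + c <= 1 by lra.
have t20 : 0 <= t2 by lra.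
have t2c : t2 + c <= 1 by lra.
have [mp [Emp Hmp]] := mean_val c0 hp t10 t1c t20 t2c Hmu.
have [mq [Emq Hmq]] := mean_val c0 hq t10 t1c t20 t2c Hnu.
have mpE : mp = (p * t1 + (1 - p) * t2) / (1 - c) by rewrite -Hmp mulfK.
have mqE : mq = (q * t1 + (1 - q) * t2) / (1 - c) by rewrite -Hmq mulfK.
have mu01 := Hmu.1; have nu01 := Hnu.1.
set v := (t2 - t1) / (1 - c) * `|p - q|.
have I0 := @int_dist_ge0 R.
have [lb [g0 [cg0 Ig0]]] : (forall g, is_coupling mu nu g -> (v%:E <= cost g)%E) /\
    exists g, is_coupling mu nu g /\ cost g = v%:E.
  case: (ltgtP p q) pq => // [pltq|qltp] _.
  - have hv : v = mp - mq.
      by rewrite /v ltr0_norm ?subr_lt0 // mpE mqE; field.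
    split.
    + move=> g cg; rewrite hv; apply: hlp1; first exact: I0.
      by have := lower cg; rewrite Emp Emq; apply.
    + exists (gam mu nu); split; first exact: gam_cp.
      rewrite hv; apply: hlp2.
      have := gam_int' mu01 nu01 (dominance c0 t2a hq pltq Hnu Hmu).
      by rewrite Emp Emq; apply.
  - have hv : v = mq - mp.
      by rewrite /v gtr0_norm ?subr_gt0 // mpE mqE; field.
    split.
    + move=> g cg; rewrite hv; apply: hlp1; first exact: I0.
      by have := lower' cg; rewrite Emp Emq; apply.
    + exists (gam mu nu); split; first exact: gam_cp.
      rewrite hv; apply: hlp2.
      have := gam_int mu01 nu01 (dominance c0 t2a hp qltp Hmu Hnu).
      by rewrite Emp Emq; apply.
rewrite /W1; apply/eqP; rewrite eq_le; apply/andP; split.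
- by apply: ereal_inf_lbound; exists g0 => //.
- by apply: le_ereal_inf_tmp => _ [g cg <-]; exact: lb.
Qed.
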